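(* Let $f\in C^1(\mathbb{R})$ satisfy (f1), $f_0\in(0,+\infty)$, $f_\infty=0$, $f'(s)<Nf(s)/s$ for all $s>0$ and $f'(s)>Nf(s)/s$ for all $s<0$. Then every negative solution $u$ of (MO) (for any $\lambda>0$) is stable; hence it is non-degenerate and has Morse index $M(u)=0$.
   Context: Let $N\ge1$ be an integer. For $\lambda\ge0$, problem (MO) is: find $u\in C^2[0,1]$ with $\left((u')^N\right)'=\lambda^N N r^{N-1}f(-u)$ in $(0,1)$, $u'(0)=u(1)=0$. Condition (f1): $f(s)s^N>0$ for $s\neq0$. $f_0^N=\lim_{s\to0}f(s)/s^N$, $f_\infty^N=\lim_{|s|\to\infty}f(s)/s^N$. For a solution $u$ of (MO), set $v=-u$; the linearized eigenvalue problem at $u$ is $\left(-\phi'(-v')^{N-1}\right)'-\lambda^N r^{N-1}f'(v)\phi=\frac{\mu}{N}\phi$ in $(0,1)$, $\phi'(0)=\phi(1)=0$. The solution $u$ is stable if all eigenvalues $\mu$ of this problem are positive, degenerate if $0$ is an eigenvalue, and its Morse index $M(u)$ is the number of negative eigenvalues. *)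

(* Defs.v *)
From Stdlib Require Import Reals Lra List.
Import ListNotations.
Open Scope R_scope.

Definition is_deriv01 (f f' : R -> R) : Prop :=
  forall x, 0 <= x <= 1 ->
    forall eps, 0 < eps -> exists delta, 0 < delta /\
      forall y, 0 <= y <= 1 -> y <> x -> Rabs (y - x) < delta ->
        Rabs ((f y - f x) / (y - x) - f' x) < eps.

Definition continuous01 (g : R -> R) : Prop :=
  forall x, 0 <= x <= 1 ->
    forall eps, 0 < eps -> exists delta, 0 < delta /\
      forall y, 0 <= y <= 1 -> Rabs (y - x) < delta -> Rabs (g y - g x) < eps.

Definition C2_01 (u u1 u2 : R -> R) : Prop :=
  is_deriv01 u u1 /\ is_deriv01 u1 u2 /\ continuous01 u2.

Definition MO_solution (N : nat) (f : R -> R) (lam : R) (u u1 : R -> R) : Prop :=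
  exists u2, C2_01 u u1 u2 /\
    (forall r, 0 < r < 1 ->
       derivable_pt_lim (fun t => (u1 t) ^ N) r
         (lam ^ N * INR N * r ^ (N - 1) * f (- u r))) /\
    u1 0 = 0 /\ u 1 = 0.

(* mu is an eigenvalue of the linearized problem at u (v = -u, v' = -u1):
   (-phi' (-v')^(N-1))' - lam^N r^(N-1) f'(v) phi = (mu/N) phi in (0,1),
   phi'(0) = phi(1) = 0, with a nontrivial phi in C^2[0,1]. *)
Definition lin_eigenvalue (N : nat) (df : R -> R) (lam : R) (u u1 : R -> R)
    (mu : R) : Prop :=
  exists phi phi1 phi2, C2_01 phi phi1 phi2 /\
    (exists r, 0 <= r <= 1 /\ phi r <> 0) /\
    phi1 0 = 0 /\ phi 1 = 0 /\
    forall r, 0 < r < 1 ->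
      derivable_pt_lim (fun t => - phi1 t * (- (- u1 t)) ^ (N - 1)) r
        (lam ^ N * r ^ (N - 1) * df (- u r) * phi r + mu / INR N * phi r).

Definition stable N df lam u u1 : Prop :=
  forall mu, lin_eigenvalue N df lam u u1 mu -> 0 < mu.

Definition degenerate N df lam u u1 : Prop := lin_eigenvalue N df lam u u1 0.

Definition morse_index N df lam u u1 (k : nat) : Prop :=
  exists l : list R, NoDup l /\ length l = k /\
    forall mu, In mu l <-> (lin_eigenvalue N df lam u u1 mu /\ mu < 0).

(* Main.v *)
Require Import Defs.
From Stdlib Require Import Reals Lra Lia.
Open Scope R_scope.

Definition cl (x : R) : R := Rmax 0 (Rmin 1 x).

Lemma cl_in x : 0 <= cl x <= 1.
Proof. unfold cl, Rmax, Rmin; repeat destruct Rle_dec; lra. Qed.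

Lemma cl_id x : 0 <= x <= 1 -> cl x = x.
Proof. intros; unfold cl, Rmax, Rmin; repeat destruct Rle_dec; lra. Qed.

Lemma cl_lip x y : Rabs (cl y - cl x) <= Rabs (y - x).
Proof.
  unfold cl, Rmax, Rmin; repeat destruct Rle_dec;
  unfold Rabs; repeat destruct Rcase_abs; lra.
Qed.

Lemma cont01_ext g : continuous01 g -> continuity (fun x => g (cl x)).
Proof.
  intros Hg x eps He.
  destruct (Hg (cl x) (cl_in x) eps He) as [d [Hd H]].
  exists d; split; [lra|].
  intros y [_ Hy]. simpl in *. unfold Rdist in *.
  apply H. apply cl_in. pose proof (cl_lip x y). lra.
Qed.

Lemma deriv01_cont F F' : is_deriv01 F F' -> continuous01 F.
Proof.
  intros HF x Hx eps He.
  destruct (HF x Hx 1 ltac:(lra)) as [d [Hd H]].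
  exists (Rmin d (eps / (Rabs (F' x) + 1))).
  assert (0 < Rabs (F' x) + 1) by (pose proof (Rabs_pos (F' x)); lra).
  split. { apply Rmin_pos; [lra|]. apply Rdiv_lt_0_compat; lra. }
  intros y Hy Hxy.
  destruct (Req_dec y x) as [->|Hne]. { rewrite Rminus_diag, Rabs_R0; lra. }
  assert (Hm1 := Rmin_l d (eps / (Rabs (F' x) + 1))).
  assert (Hm2 := Rmin_r d (eps / (Rabs (F' x) + 1))).
  specialize (H y Hy Hne ltac:(lra)).
  assert (Hyx : y - x <> 0) by lra.
  assert (E : F y - F x = ((F y - F x) / (y - x)) * (y - x)) by (field; auto).
  rewrite E, Rabs_mult.
  assert (Rabs ((F y - F x) / (y - x)) < Rabs (F' x) + 1).
  { pose proof (Rabs_triang_inv ((F y - F x) / (y - x)) (F' x)). lra. }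
  assert (Rabs (y - x) < eps / (Rabs (F' x) + 1)) by lra.
  assert (Rabs (y-x) * (Rabs (F' x) + 1) < eps).
  { apply (Rmult_lt_compat_r (Rabs (F' x) + 1)) in H2; auto.
    unfold Rdiv in H2; rewrite Rmult_assoc, Rinv_l in H2; lra. }
  pose proof (Rabs_pos (y - x)). pose proof (Rabs_pos ((F y - F x) / (y - x))).
  nra.
Qed.

Lemma deriv01_int F F' x : is_deriv01 F F' -> 0 < x < 1 ->
  derivable_pt_lim F x (F' x).
Proof.
  intros HF Hx eps He.
  destruct (HF x ltac:(lra) eps He) as [d [Hd H]].
  assert (Hp : 0 < Rmin d (Rmin x (1 - x))).
  { repeat apply Rmin_pos; lra. }
  exists (mkposreal _ Hp). intros h Hh Hha. simpl in Hha.
  pose proof (Rmin_l d (Rmin x (1-x))). pose proof (Rmin_r d (Rmin x (1-x))).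
  pose proof (Rmin_l x (1-x)). pose proof (Rmin_r x (1-x)).
  assert (Hb : -x < h < 1 - x) by (unfold Rabs in Hha; destruct Rcase_abs; lra).
  specialize (H (x + h) ltac:(lra) ltac:(lra)).
  replace (x + h - x) with h in H by ring. apply H. lra.
Qed.

Lemma dlim_local f g x l d : derivable_pt_lim f x l -> 0 < d ->
  (forall y, Rabs (y - x) < d -> f y = g y) -> derivable_pt_lim g x l.
Proof.
  intros Hf Hd Heq eps He.
  destruct (Hf eps He) as [del H].
  assert (Hp : 0 < Rmin del d) by (apply Rmin_pos; [apply cond_pos|lra]).
  exists (mkposreal _ Hp). intros h Hh Hha. simpl in Hha.
  pose proof (Rmin_l del d). pose proof (Rmin_r del d).
  rewrite <- (Heq (x+h)), <- (Heq x).
  - apply H; auto; lra.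
  - rewrite Rminus_diag, Rabs_R0; lra.
  - replace (x + h - x) with h by ring; lra.
Qed.

Lemma mvt01 F F' a b : 0 <= a -> a < b -> b <= 1 ->
  (forall x, a <= x <= b -> continuity_pt (fun y => F (cl y)) x) ->
  (forall c, a < c < b -> derivable_pt_lim F c (F' c)) ->
  exists c, a < c < b /\ F b - F a = F' c * (b - a).
Proof.
  intros Ha Hab Hb Hc Hd.
  assert (Hd' : forall c, a < c < b -> derivable_pt_lim (fun y => F (cl y)) c (F' c)).
  { intros c Hcc. apply (dlim_local F _ c _ (Rmin (c - 0) (1 - c))).
    - apply Hd; auto.
    - apply Rmin_pos; lra.
    - intros y Hy. pose proof (Rmin_l (c-0) (1-c)). pose proof (Rmin_r (c-0) (1-c)).
      rewrite cl_id; auto. unfold Rabs in Hy; destruct Rcase_abs; lra. }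
  pose (pr1 := fun c (P : a < c < b) => exist (fun l => derivable_pt_lim (fun y => F (cl y)) c l) (F' c) (Hd' c P)).
  destruct (MVT (fun y => F (cl y)) id a b pr1 (fun c _ => derivable_pt_id c) Hab Hc
     (fun c _ => derivable_continuous_pt id c (derivable_pt_id c))) as [c [P E]].
  exists c; split; auto.
  rewrite derive_pt_id in E. simpl in E. unfold id in E.
  rewrite !cl_id in E by lra. lra.
Qed.

Lemma cont_pow g n : continuity g -> continuity (fun x => g x ^ n).
Proof.
  intros Hg; induction n.
  - simpl. apply continuity_const. intros x y; reflexivity.
  - change (continuity (g * (fun x => g x ^ n))%F). now apply continuity_mult.
Qed.
Lemma core N f df lam u u1 u2 phi phi1 phi2 mu
 (hN : (1<=N)%nat)
 (hf1 : forall s, s <> 0 -> 0 < f s * s ^ N)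
 (hpos : forall s, 0 < s -> df s < INR N * f s / s)
 (hlam : 0 < lam)
 (Hu : C2_01 u u1 u2)
 (Heq : forall r, 0<r<1 -> derivable_pt_lim (fun t => u1 t ^ N) r
          (lam^N * INR N * r^(N-1) * f (- u r)))
 (Hu10 : u1 0 = 0) (Hu1 : u 1 = 0) (Hneg : forall r, 0<=r<1 -> u r < 0)
 (Hphi : C2_01 phi phi1 phi2) (Hnz : exists r, 0<=r<=1 /\ phi r <> 0)
 (Hp0 : phi1 0 = 0) (Hp1 : phi 1 = 0)
 (Heig : forall r, 0<r<1 -> derivable_pt_lim (fun t => - phi1 t * (- (- u1 t))^(N-1)) r
          (lam^N * r^(N-1) * df (- u r) * phi r + mu / INR N * phi r))
 (hmu : mu <= 0) : False.
Proof.
  destruct Hu as [Du [Du1 Cu2]]. destruct Hphi as [Dp [Dp1 Cp2]].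
  assert (Cu := cont01_ext _ (deriv01_cont _ _ Du)).
  assert (Cu1 := cont01_ext _ (deriv01_cont _ _ Du1)).
  assert (Cp := cont01_ext _ (deriv01_cont _ _ Dp)).
  assert (Cp1 := cont01_ext _ (deriv01_cont _ _ Dp1)).
  assert (HNpos : 0 < INR N) by (apply lt_0_INR; lia).
  assert (hQ : forall x, u1 x ^ N = u1 x ^ (N-1) * u1 x).
  { intros x. destruct N; [lia|]. simpl. rewrite Nat.sub_0_r. ring. }
  assert (fpos : forall s, 0 < s -> 0 < f s).
  { intros s Hs. specialize (hf1 s ltac:(lra)). pose proof (pow_lt s N Hs).
    destruct (Rlt_le_dec 0 (f s)); auto. nra. }
  (* Q increasing: Q z > 0 for z in (0,1] *)
  assert (Qpos : forall z, 0 < z <= 1 -> 0 < u1 z ^ N).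
  { intros z Hz.
    destruct (mvt01 (fun t => u1 t ^ N) (fun r => lam^N * INR N * r^(N-1) * f (- u r)) 0 z
       ltac:(lra) ltac:(lra) ltac:(lra)) as [c [Hc E]].
    - intros x _. apply (cont_pow (fun y => u1 (cl y)) N Cu1).
    - intros c Hc. apply Heq. lra.
    - simpl in E. rewrite Hu10, pow_i in E by lia.
      assert (0 < lam^N * INR N * c^(N-1) * f (- u c)).
      { pose proof (pow_lt lam N hlam). pose proof (pow_lt c (N-1) ltac:(lra)).
        pose proof (fpos (- u c) ltac:(specialize (Hneg c ltac:(lra)); lra)).
        repeat apply Rmult_lt_0_compat; auto. }
      nra. }
  assert (U1pos : 0 < u1 1).
  { assert (0 <= u1 1).
    { destruct (Rle_lt_dec 0 (u1 1)) as [|Hl]; auto. exfalso.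
      destruct (Du 1 ltac:(lra) (- u1 1) ltac:(lra)) as [d [Hd H]].
      set (y := Rmax 0 (1 - d/2)).
      assert (Hy : 0 <= y < 1 /\ 1 - d/2 <= y).
      { unfold y, Rmax; destruct Rle_dec; lra. }
      assert (Hyd : Rabs (y - 1) < d).
      { unfold Rabs; destruct Rcase_abs; lra. }
      specialize (H y ltac:(lra) ltac:(lra) Hyd).
      rewrite Hu1, Rminus_0_r in H.
      assert (0 < u y / (y - 1)).
      { specialize (Hneg y ltac:(lra)).
        replace (u y / (y - 1)) with ((- u y) / (1 - y)) by (field; lra).
        apply Rdiv_lt_0_compat; lra. }
      unfold Rabs in H; destruct Rcase_abs in H; lra. }
    destruct H as [H|H]; auto. exfalso.
    pose proof (Qpos 1 ltac:(lra)). rewrite <- H, pow_i in H0 by lia. lra. }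
  assert (u1pos : forall r, 0 < r < 1 -> 0 < u1 r).
  { intros r Hr. destruct (Rlt_le_dec 0 (u1 r)) as [|Hl]; auto. exfalso.
    assert (Hr0 : u1 r <> 0).
    { intro E. pose proof (Qpos r ltac:(lra)). rewrite E, pow_i in H by lia. lra. }
    destruct (IVT (fun x => u1 (cl x)) r 1 Cu1 ltac:(lra)) as [z [Hz Ez]].
    - rewrite cl_id by lra. lra.
    - rewrite cl_id by lra. lra.
    - rewrite cl_id in Ez by lra. pose proof (Qpos z ltac:(lra)).
      rewrite Ez, pow_i in H by lia. lra. }
  pose (P := fun t => - phi1 t * (- (- u1 t))^(N-1)).
  pose (Q := fun t => u1 t ^ N).
  pose (W := fun t => P t * u t + phi t * Q t).
  pose (H := fun t => W t * phi t / (- u t)).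
  pose (P' := fun r => lam^N * r^(N-1) * df (- u r) * phi r + mu / INR N * phi r).
  pose (Q' := fun r => lam^N * INR N * r^(N-1) * f (- u r)).
  pose (W' := fun r => P' r * u r + P r * u1 r + (phi1 r * Q r + phi r * Q' r)).
  pose (Hd := fun r => ((W' r * phi r + W r * phi1 r) * (- u r) - (- u1 r) * (W r * phi r)) / (- u r)²).
  assert (DH : forall r, 0 < r < 1 -> derivable_pt_lim H r (Hd r)).
  { intros r Hr.
    assert (DW : derivable_pt_lim W r (W' r)).
    { change W with (P * u + phi * Q)%F. unfold W'.
      apply derivable_pt_lim_plus; apply derivable_pt_lim_mult.
      - apply Heig; auto.
      - apply deriv01_int; auto.
      - apply deriv01_int; auto.
      - apply Heq; auto. }
    change H with ((W * phi) / (- u))%F. unfold Hd.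
    apply (derivable_pt_lim_div (W * phi)%F (- u)%F r (W' r * phi r + W r * phi1 r) (- u1 r)).
    - apply derivable_pt_lim_mult; auto. apply deriv01_int; auto.
    - apply derivable_pt_lim_opp. apply deriv01_int; auto.
    - specialize (Hneg r ltac:(lra)). unfold opp_fct. lra. }
  pose (G := fun r => lam^N * r^(N-1) * (INR N * f (- u r) - (- u r) * df (- u r)) - mu / INR N * (- u r)).
  assert (Hd_eq : forall r, 0 < r < 1 -> Hd r =
     (phi r ^ 2 * G r * (- u r) + u1 r ^ (N-1) * (phi r * u1 r - phi1 r * u r)^2) / (- u r)^2).
  { intros r Hr. specialize (Hneg r ltac:(lra)).
    unfold Hd, W', W, P', Q', P, Q, G. rewrite hQ. rewrite Ropp_involutive.
    unfold Rsqr. field. split; lra. }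
  assert (Gpos : forall r, 0 < r < 1 -> 0 < G r).
  { intros r Hr. specialize (Hneg r ltac:(lra)). unfold G.
    set (v := - u r). assert (Hv : 0 < v) by (unfold v; lra).
    pose proof (hpos v Hv).
    assert (v * df v < INR N * f v).
    { apply (Rmult_lt_compat_l v) in H0; auto.
      replace (v * (INR N * f v / v)) with (INR N * f v) in H0 by (field; lra). lra. }
    pose proof (pow_lt lam N hlam). pose proof (pow_lt r (N-1) ltac:(lra)).
    assert (mu / INR N <= 0).
    { unfold Rdiv. pose proof (Rinv_0_lt_compat _ HNpos). nra. }
    assert (0 < lam ^ N * r ^ (N - 1) * (INR N * f v - v * df v)).
    { repeat apply Rmult_lt_0_compat; lra. }
    nra. }
  assert (Hdnn : forall r, 0 < r < 1 -> 0 <= Hd r).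
  { intros r Hr. rewrite Hd_eq by auto.
    pose proof (Gpos r Hr). specialize (Hneg r ltac:(lra)).
    pose proof (pow_le (u1 r) (N-1) ltac:(pose proof (u1pos r Hr); lra)).
    unfold Rdiv; apply Rmult_le_pos; [|left; apply Rinv_0_lt_compat, pow_lt; lra].
    assert (0 <= phi r ^ 2 * G r * (- u r)).
    { apply Rmult_le_pos; [|lra]. apply Rmult_le_pos; [|lra]. apply pow2_ge_0. }
    pose proof (pow2_ge_0 (phi r * u1 r - phi1 r * u r)). nra. }
  assert (Hdpos : forall r, 0 < r < 1 -> phi r <> 0 -> 0 < Hd r).
  { intros r Hr Hp. rewrite Hd_eq by auto.
    pose proof (Gpos r Hr). specialize (Hneg r ltac:(lra)).
    pose proof (pow_le (u1 r) (N-1) ltac:(pose proof (u1pos r Hr); lra)).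
    apply Rdiv_lt_0_compat; [|apply pow_lt; lra].
    assert (0 < phi r ^ 2 * G r * (- u r)).
    { apply Rmult_lt_0_compat; [|lra]. apply Rmult_lt_0_compat; [|lra].
      destruct (Rlt_le_dec 0 (phi r ^ 2)); auto.
      pose proof (pow2_ge_0 (phi r)). assert (phi r ^ 2 = 0) by lra. exfalso; apply Hp. nra. }
    pose proof (pow2_ge_0 (phi r * u1 r - phi1 r * u r)). nra. }
  assert (CW : continuity (fun x => W (cl x))).
  { change (continuity ((fun x => P (cl x)) * (fun x => u (cl x)) + (fun x => phi (cl x)) * (fun x => Q (cl x)))%F).
    apply continuity_plus; apply continuity_mult; auto.
    - change (continuity ((- (fun x => phi1 (cl x))) * (fun x => (- - u1 (cl x))^(N-1)))%F).
      apply continuity_mult. apply continuity_opp; auto.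
      apply (cont_pow (fun x => - - u1 (cl x))).
      change (continuity (- (- (fun x => u1 (cl x))))%F).
      do 2 apply continuity_opp; auto.
    - apply (cont_pow (fun x => u1 (cl x))); auto. }
  assert (W1 : W 1 = 0). { unfold W. rewrite Hu1, Hp1. ring. }
  assert (H1 : H 1 = 0). { unfold H. rewrite Hp1, Hu1. unfold Rdiv. ring. }
  assert (H0 : H 0 = 0).
  { unfold H, W, P, Q. rewrite Hp0, Hu10, pow_i by lia. unfold Rdiv. ring. }
  assert (CH : forall x, 0 <= x <= 1 -> continuity_pt (fun y => H (cl y)) x).
  { intros x Hx. destruct (Rlt_le_dec x 1) as [Hx1|Hx1].
    - change (continuity_pt ((fun y => (W (cl y) * phi (cl y))%R) / (- (fun y => u (cl y))))%F x).
      apply continuity_pt_div.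
      + apply continuity_pt_mult; auto.
      + apply continuity_pt_opp; auto.
      + unfold opp_fct. rewrite cl_id by lra. specialize (Hneg x ltac:(lra)). lra.
    - assert (x = 1) by lra. subst x.
      set (K := Rabs (phi1 1) + 1). set (c := u1 1).
      assert (HK : 0 < K) by (unfold K; pose proof (Rabs_pos (phi1 1)); lra).
      intros eps He.
      destruct (Dp 1 ltac:(lra) 1 ltac:(lra)) as [d1 [Hd1 B1]].
      destruct (Du 1 ltac:(lra) (c/2) ltac:(unfold c; lra)) as [d2 [Hd2 B2]].
      assert (He' : 0 < eps * c / (2 * K)).
      { apply Rdiv_lt_0_compat; [apply Rmult_lt_0_compat|]; unfold c; lra. }
      destruct (CW 1 (eps * c / (2 * K)) He') as [d3 [Hd3 B3]].
      exists (Rmin d1 (Rmin d2 d3)). split.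
      { repeat apply Rmin_pos; lra. }
      intros y [Dy Hy]. simpl in Hy |- *. unfold Rdist in *.
      pose proof (Rmin_l d1 (Rmin d2 d3)). pose proof (Rmin_r d1 (Rmin d2 d3)).
      pose proof (Rmin_l d2 d3). pose proof (Rmin_r d2 d3).
      rewrite (cl_id 1) by lra. rewrite H1, Rminus_0_r.
      set (z := cl y).
      assert (Hz := cl_in y). fold z in Hz.
      assert (Hzy : Rabs (z - 1) < Rmin d1 (Rmin d2 d3)).
      { pose proof (cl_lip 1 y). rewrite (cl_id 1) in H6 by lra. fold z in H6. lra. }
      destruct (Req_dec z 1) as [Ez|Nz].
      { rewrite Ez, H1, Rabs_R0. lra. }
      assert (Hz1 : z < 1) by lra.
      assert (Eabs : Rabs (z - 1) = 1 - z) by (unfold Rabs; destruct Rcase_abs; lra).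
      specialize (B1 z Hz Nz ltac:(lra)). rewrite Hp1, Rminus_0_r in B1.
      specialize (B2 z Hz Nz ltac:(lra)). rewrite Hu1, Rminus_0_r in B2.
      assert (Hy1 : y <> 1). { intro Ey. apply Nz. unfold z. rewrite Ey. apply cl_id; lra. }
      assert (Hyd3 : dist R_met y 1 < d3).
      { simpl. unfold Rdist. idtac. lra. }
      assert (B3' := B3 y (conj Dy Hyd3)).
      simpl in B3'. unfold Rdist in B3'. rewrite (cl_id 1), W1, Rminus_0_r in B3' by lra.
      fold z in B3'.
      assert (A1 : Rabs (phi z) <= K * (1 - z)).
      { assert (Rabs (phi z / (z - 1)) < K).
        { unfold K. pose proof (Rabs_triang_inv (phi z / (z - 1)) (phi1 1)). lra. }
        replace (phi z) with (phi z / (z - 1) * (z - 1)) by (field; lra).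
        rewrite Rabs_mult, Eabs. apply Rmult_le_compat_r; lra. }
      assert (A2 : c / 2 * (1 - z) < - u z).
      { assert (c / 2 < u z / (z - 1)). { apply Rabs_def2 in B2. fold c in B2. lra. }
        replace (u z) with (u z / (z - 1) * (z - 1)) by (field; lra).
        assert (0 < 1 - z) by lra. nra. }
      assert (Hc : 0 < c) by (unfold c; lra).
      assert (Huz : 0 < - u z) by nra.
      unfold H. unfold Rdiv. rewrite !Rabs_mult, Rabs_inv, (Rabs_right (- u z)) by lra.
      set (w := Rabs (W z)) in *. set (p := Rabs (phi z)) in *.
      assert (Hw : 0 <= w) by apply Rabs_pos.
      assert (S1 : w * p <= w * (K * (1 - z))) by (apply Rmult_le_compat_l; lra).
      assert (S2 : K * (1 - z) <= 2 * K / c * (- u z)).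
      { unfold Rdiv. replace (2 * K * / c * - u z) with (K * (2 / c * - u z)) by (field; lra).
        apply Rmult_le_compat_l; [lra|].
        assert (c / 2 * (1 - z) * (2 / c) = 1 - z) by (field; lra).
        assert (0 < 2 / c) by (apply Rdiv_lt_0_compat; lra). nra. }
      assert (S3 : w * (2 * K / c) < eps).
      { replace eps with (eps * c / (2 * K) * (2 * K / c)) by (field; lra).
        apply Rmult_lt_compat_r; [apply Rdiv_lt_0_compat; lra| lra]. }
      assert (S4 : w * p < eps * - u z).
      { assert (w * (K * (1 - z)) <= w * (2 * K / c * - u z)) by (apply Rmult_le_compat_l; lra).
        replace (w * (2 * K / c * - u z)) with (w * (2 * K / c) * - u z) in H6 by ring.
        assert (w * (2 * K / c) * - u z < eps * - u z) by (apply Rmult_lt_compat_r; lra).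
        lra. }
      apply (Rmult_lt_reg_r (- u z)); auto.
      rewrite Rmult_assoc, Rinv_l by lra. lra. }
  assert (Hle : forall r, 0 < r < 1 -> H r <= 0).
  { intros r Hr.
    destruct (mvt01 H Hd r 1 ltac:(lra) ltac:(lra) ltac:(lra)) as [c [Hc E]].
    - intros x Hx. apply CH. lra.
    - intros c Hc. apply DH. lra.
    - pose proof (Hdnn c ltac:(lra)). rewrite H1 in E. nra. }
  assert (Hge : forall r, 0 < r < 1 -> 0 <= H r).
  { intros r Hr.
    destruct (mvt01 H Hd 0 r ltac:(lra) ltac:(lra) ltac:(lra)) as [c [Hc E]].
    - intros x Hx. apply CH. lra.
    - intros c Hc. apply DH. lra.
    - pose proof (Hdnn c ltac:(lra)). rewrite H0 in E. nra. }
  assert (Hr0 : exists r0, 0 < r0 < 1 /\ phi r0 <> 0).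
  { destruct Hnz as [r [Hr Hpr]].
    destruct (Req_dec r 1) as [->|Hr1]; [contradiction|].
    destruct (Req_dec r 0) as [->|Hr00].
    - destruct (deriv01_cont _ _ Dp 0 ltac:(lra) (Rabs (phi 0)) ltac:(apply Rabs_pos_lt; auto))
        as [d [Hd0 B]].
      set (y := Rmin (d/2) (1/2)).
      assert (0 < y <= d/2 /\ y <= 1/2).
      { unfold y. split; [split|]. apply Rmin_pos; lra. apply Rmin_l. apply Rmin_r. }
      exists y; split; [lra|].
      intro Ey. specialize (B y ltac:(lra) ltac:(rewrite Rminus_0_r, Rabs_right; lra)).
      rewrite Ey, Rminus_0_l, Rabs_Ropp in B. lra.
    - exists r; split; [lra|auto]. }
  destruct Hr0 as [r0 [Hr0 Hp0']].
  pose proof (Hdpos r0 Hr0 Hp0') as Hpos.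
  destruct (DH r0 Hr0 (Hd r0 / 2) ltac:(lra)) as [del Hdel].
  set (h := Rmin (del / 2) ((1 - r0) / 2)).
  assert (Hh : 0 < h <= del / 2 /\ h <= (1 - r0) / 2).
  { pose proof (cond_pos del). unfold h. split; [split|]. apply Rmin_pos; lra. apply Rmin_l. apply Rmin_r. }
  pose proof (cond_pos del).
  specialize (Hdel h ltac:(lra) ltac:(rewrite Rabs_right; lra)).
  apply Rabs_def2 in Hdel.
  assert (0 < (H (r0 + h) - H r0) / h) by lra.
  pose proof (Hle (r0 + h) ltac:(lra)). pose proof (Hge r0 Hr0).
  assert (H (r0 + h) - H r0 <= 0) by lra.
  assert ((H (r0 + h) - H r0) / h <= 0).
  { unfold Rdiv. pose proof (Rinv_0_lt_compat h ltac:(lra)). nra. }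
  lra.
Qed.

Theorem lemma5p3 (N : nat) (f df : R -> R)
  (hN : (1 <= N)%nat)
  (* f in C^1(R) with derivative df *)
  (hf_der : forall s, derivable_pt_lim f s (df s))
  (hdf_cont : continuity df)
  (* (f1) *)
  (hf1 : forall s, s <> 0 -> 0 < f s * s ^ N)
  (* f_0^N in (0, +oo) *)
  (hf0 : exists L, 0 < L /\
     forall eps, 0 < eps -> exists delta, 0 < delta /\
       forall s, s <> 0 -> Rabs s < delta -> Rabs (f s / s ^ N - L) < eps)
  (* f_oo^N = 0 *)
  (hfinf : forall eps, 0 < eps -> exists M, forall s, M < Rabs s ->
       Rabs (f s / s ^ N) < eps)
  (hpos : forall s, 0 < s -> df s < INR N * f s / s)
  (hneg : forall s, s < 0 -> df s > INR N * f s / s) :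
  forall (lam : R) (u u1 : R -> R),
    0 < lam ->
    MO_solution N f lam u u1 ->
    (forall r, 0 <= r < 1 -> u r < 0) ->
    stable N df lam u u1 /\ ~ degenerate N df lam u u1 /\
    morse_index N df lam u u1 0.
Proof.
  intros lam u u1 hlam [u2 [Hu [Heq [Hu10 Hu1]]]] Hneg.
  assert (St : stable N df lam u u1).
  { intros mu [phi [phi1 [phi2 [Hphi [Hnz [Hp0 [Hp1 Heig]]]]]]].
    destruct (Rlt_le_dec 0 mu) as [|Hmu]; auto. exfalso.
    exact (core N f df lam u u1 u2 phi phi1 phi2 mu hN hf1 hpos hlam Hu Heq Hu10 Hu1 Hneg
             Hphi Hnz Hp0 Hp1 Heig Hmu). }
  split; [exact St|]. split.
  - intro D. pose proof (St 0 D). lra.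
  - exists nil. split; [constructor|]. split; [reflexivity|].
    intros mu; split; [intros []|]. intros [E Hm]. pose proof (St mu E). lra.
Qed.
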